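(* For parameters $\mu\ge 0$, $0\le c\le\mu$, $\sigma\ge 0$, $\eta_s\ge 0$, $\eta_c\ge 0$, let $u_c^*$ be the optimal value of $$\max_{p_0\in\mathbb{R},\,r\in[0,1]}\; p_0+r\mu-c-\eta_c r^2\sigma^2 \quad\text{subject to}\quad (1-r)\mu-p_0-\eta_s(1-r)^2\sigma^2\ge 0,$$ and let $u_{c,r=0}^*$ be the optimal value of the same problem with $r$ fixed to $0$. Then the set $$\mathbb{T}=\{(\mu,c,\eta_s,\eta_c,\sigma):\ u_c^*\ge 0,\ u_{c,r=0}^*<0,\ \mu\ge 0,\ 0\le c\le\mu,\ \eta_s\ge 0,\ \eta_c\ge 0\}$$ is non-empty; that is, there are parameters for which trade occurs when royalties are allowed but not when they are ruled out.
   Context: Interpretation: a creator (cost $c$) sells an NFT at mint price $p_0$ with royalty rate $r$ to a speculator, who resells it at the realized end-buyer valuation $V$ with mean $\mu$ and variance $\sigma^2$; both have mean-variance utility with risk coefficients $\eta_c$ (creator) and $\eta_s$ (speculator); the constraint is the speculator's participation constraint. Trade occurs iff the creator's optimal utility is nonnegative. *)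

(* Defs.v *)
From Stdlib Require Import Reals.
Open Scope R_scope.

Definition creator_obj (mu c sigma eta_c p0 r : R) : R :=
  p0 + r * mu - c - eta_c * r ^ 2 * sigma ^ 2.

Definition feasible (mu sigma eta_s p0 r : R) : Prop :=
  (1 - r) * mu - p0 - eta_s * (1 - r) ^ 2 * sigma ^ 2 >= 0.

Definition values_royalty (mu c sigma eta_s eta_c : R) (v : R) : Prop :=
  exists p0 r, 0 <= r <= 1 /\ feasible mu sigma eta_s p0 r /\
               v = creator_obj mu c sigma eta_c p0 r.

Definition values_no_royalty (mu c sigma eta_s eta_c : R) (v : R) : Prop :=
  exists p0, feasible mu sigma eta_s p0 0 /\
             v = creator_obj mu c sigma eta_c p0 0.

Definition opt_value (mu c sigma eta_s eta_c u : R) : Prop :=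
  is_lub (values_royalty mu c sigma eta_s eta_c) u.

Definition opt_value_r0 (mu c sigma eta_s eta_c u : R) : Prop :=
  is_lub (values_no_royalty mu c sigma eta_s eta_c) u.

(* Main.v *)
Require Import Defs.
From Stdlib Require Import Reals Lra.
Open Scope R_scope.

Theorem corollary3 :
  exists mu c eta_s eta_c sigma u_star u_star0 : R,
    0 <= mu /\ 0 <= c <= mu /\ 0 <= sigma /\ 0 <= eta_s /\ 0 <= eta_c /\
    opt_value mu c sigma eta_s eta_c u_star /\
    opt_value_r0 mu c sigma eta_s eta_c u_star0 /\
    u_star >= 0 /\ u_star0 < 0.
Proof.
  exists 1, (2/5), 1, 1, 1, (1/10), (-2/5).
  unfold opt_value, opt_value_r0, values_royalty, values_no_royalty,
    feasible, creator_obj.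
  repeat split; try lra.
  - intros v [p0 [r [Hr [Hf ->]]]]. simpl in *. assert (0 <= (r - 1/2) * (r - 1/2)) by apply Rle_0_sqr. ring_simplify in Hf. ring_simplify. lra.
  - intros b Hb. apply Hb. exists (1/4), (1/2). simpl. repeat split; lra.
  - intros v [p0 [Hf ->]]. simpl in *. lra.
  - intros b Hb. apply Hb. exists 0. simpl. split; lra.
Qed.
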